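(* Let $p$ be a non-constant polynomial with real coefficients and let $Q=\{p(k);\,k\ge0\}\subseteq\mathbb R$. Then for every $\delta>0$, the set $(-\delta,\delta)\cup Q$ is a Kazhdan set in $\mathbb R$.
   Context: $\mathbb R$ is the additive group with its usual topology. A subset $Q$ is a Kazhdan set in $\mathbb R$ if there exists $\varepsilon>0$ such that every strongly continuous unitary representation $\pi$ of $\mathbb R$ having a vector $x$ with $\sup_{t\in Q}\|\pi(t)x-x\|<\varepsilon\|x\|$ has a non-zero $\mathbb R$-invariant vector. *)

(* Defs.v *)
From Stdlib Require Import Reals List.
Open Scope R_scope.

Definition C : Type := (R * R)%type.
Definition Cre (z : C) : R := fst z.
Definition Cim (z : C) : R := snd z.
Definition Cadd (z w : C) : C := (fst z + fst w, snd z + snd w).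
Definition Cmul (z w : C) : C :=
  (fst z * fst w - snd z * snd w, fst z * snd w + snd z * fst w).
Definition Cconj (z : C) : C := (fst z, - snd z).
Definition C0 : C := (0, 0).
Definition C1 : C := (1, 0).
Definition Cneg1 : C := (-1, 0).

Record HilbertSpace : Type := mkHilbert {
  hcar :> Type;
  hzero : hcar;
  hadd : hcar -> hcar -> hcar;
  hscal : C -> hcar -> hcar;
  hinner : hcar -> hcar -> C;   (* linear in the first argument *)
  hadd_assoc : forall x y z, hadd x (hadd y z) = hadd (hadd x y) z;
  hadd_comm : forall x y, hadd x y = hadd y x;
  hadd_zero : forall x, hadd x hzero = x;
  hadd_inv : forall x, hadd x (hscal Cneg1 x) = hzero;
  hscal_one : forall x, hscal C1 x = x;
  hscal_assoc : forall a b x, hscal a (hscal b x) = hscal (Cmul a b) x;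
  hscal_distr_v : forall a x y, hscal a (hadd x y) = hadd (hscal a x) (hscal a y);
  hscal_distr_s : forall a b x, hscal (Cadd a b) x = hadd (hscal a x) (hscal b x);
  hinner_conj : forall x y, hinner y x = Cconj (hinner x y);
  hinner_add : forall x y z, hinner (hadd x y) z = Cadd (hinner x z) (hinner y z);
  hinner_scal : forall a x y, hinner (hscal a x) y = Cmul a (hinner x y);
  hinner_pos : forall x, 0 <= Cre (hinner x x);
  hinner_def : forall x, hinner x x = C0 -> x = hzero;
  hcomplete : forall u : nat -> hcar,
    (forall eps, 0 < eps -> exists N, forall n m, (n >= N)%nat -> (m >= N)%nat ->
        sqrt (Cre (hinner (hadd (u n) (hscal Cneg1 (u m)))
                          (hadd (u n) (hscal Cneg1 (u m))))) < eps) ->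
    exists l, forall eps, 0 < eps -> exists N, forall n, (n >= N)%nat ->
        sqrt (Cre (hinner (hadd (u n) (hscal Cneg1 l))
                          (hadd (u n) (hscal Cneg1 l)))) < eps
}.

Arguments hzero {h}.
Arguments hadd {h}.
Arguments hscal {h}.
Arguments hinner {h}.

Definition hsub {H : HilbertSpace} (x y : H) : H := hadd x (hscal Cneg1 y).
Definition hnorm {H : HilbertSpace} (x : H) : R := sqrt (Cre (hinner x x)).

Definition unitary_rep (H : HilbertSpace) (pi : R -> H -> H) : Prop :=
  (forall t x y, pi t (hadd x y) = hadd (pi t x) (pi t y)) /\
  (forall t a x, pi t (hscal a x) = hscal a (pi t x)) /\
  (forall t x y, hinner (pi t x) (pi t y) = hinner x y) /\
  (forall t y, exists x, pi t x = y) /\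
  (forall x, pi 0 x = x) /\
  (forall s t x, pi (s + t) x = pi s (pi t x)).

Definition strongly_continuous (H : HilbertSpace) (pi : R -> H -> H) : Prop :=
  forall (x : H) (t0 eps : R), 0 < eps ->
    exists d, 0 < d /\ forall t, Rabs (t - t0) < d -> hnorm (hsub (pi t x) (pi t0 x)) < eps.

(** sup_{t in Q} ||pi(t)x - x|| < eps ||x||  (the sup is over a set bounded by 2||x||;
    the strict inequality for the supremum means some c < eps||x|| bounds all terms) *)
Definition sup_displacement_lt (H : HilbertSpace) (pi : R -> H -> H)
    (Q : R -> Prop) (x : H) (bound : R) : Prop :=
  exists c, c < bound /\ forall t, Q t -> hnorm (hsub (pi t x) x) <= c.

Definition kazhdan_set (Q : R -> Prop) : Prop :=
  exists eps, 0 < eps /\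
    forall (H : HilbertSpace) (pi : R -> H -> H),
      unitary_rep H pi -> strongly_continuous H pi ->
      (exists x : H, sup_displacement_lt H pi Q x (eps * hnorm x)) ->
      exists v : H, v <> hzero /\ forall t, pi t v = v.

(** * Real polynomials as coefficient lists [a0; a1; ...; an] *)
Fixpoint peval (p : list R) (x : R) : R :=
  match p with
  | nil => 0
  | a :: q => a + x * peval q x
  end.

Definition nonconstant_poly (p : list R) : Prop :=
  exists i, (1 <= i)%nat /\ nth i p 0 <> 0.

(* Main.v *)
Require Import Defs.
From Stdlib Require Import Reals List Lra Lia IndefiniteDescription.
Open Scope R_scope.

Fixpoint PD (n : nat) (a : R) (f : R -> R) : Prop :=
  match n with
  | O => forall x, f x = a
  | S m => exists c g, PD m a g /\ forall x, f x = c + x * g x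
  end.

Lemma PD_ext n : forall a f g, PD n a f -> (forall x, f x = g x) -> PD n a g.
Proof.
  destruct n as [|n]; simpl; intros a f g H E.
  - intros x; rewrite <- E; auto.
  - destruct H as [c [h [H1 H2]]]. exists c, h; split; auto.
    intros x; rewrite <- E; auto.
Qed.

Lemma PD_coef n : forall a b f, PD n a f -> a = b -> PD n b f.
Proof. intros; subst; auto. Qed.

Lemma PD_zero n : PD n 0 (fun _ => 0).
Proof.
  induction n; simpl; auto.
  exists 0, (fun _ => 0); split; auto. intros; ring.
Qed.

Lemma PD_embed n : forall b r, PD n b r -> PD (S n) 0 r.
Proof.
  induction n; simpl; intros b r H.
  - exists b, (fun _ => 0); split; auto. intros x; rewrite H; ring.
  - destruct H as [c [h [H1 H2]]]. exists c, h; split; auto.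
    apply (IHn _ _ H1).
Qed.

Lemma PD_add n : forall a b e f g, PD n a f -> PD n b g -> a + b = e ->
  PD n e (fun x => f x + g x).
Proof.
  induction n; simpl; intros a b e f g Hf Hg He.
  - intros x; rewrite Hf, Hg; auto.
  - destruct Hf as [c [h [H1 H2]]]. destruct Hg as [c' [h' [H1' H2']]].
    exists (c + c'), (fun x => h x + h' x); split.
    + eapply IHn; eauto.
    + intros x; rewrite H2, H2'; ring.
Qed.

Lemma PD_mulx n : forall a g, PD n a g -> PD (S n) a (fun x => x * g x).
Proof. simpl; intros. exists 0, g; split; auto. intros; ring. Qed.

Lemma PD_addc n : forall a c f, PD (S n) a f -> PD (S n) a (fun x => c + f x).
Proof.
  simpl; intros a c f [c0 [h [H1 H2]]]. exists (c + c0), h; split; auto.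
  intros x; rewrite H2; ring.
Qed.

Lemma PD_shift n : forall a g, PD n a g -> PD n a (fun x => g (x + 1)).
Proof.
  induction n; intros a g H.
  - simpl in *; intros; auto.
  - destruct H as [c [h [H1 H2]]].
    apply PD_ext with (fun x => c + ((fun y => h (y+1)) x + x * h (x+1))).
    + apply PD_addc. eapply PD_add.
      * apply (PD_embed n a). apply IHn; auto.
      * apply PD_mulx. apply (IHn a); auto.
      * ring.
    + intros x; rewrite H2; ring.
Qed.

Definition Df (f : R -> R) (x : R) : R := f (x + 1) - f x.

Lemma PD_diff n : forall a f, PD (S n) a f -> PD n (INR (S n) * a) (Df f).
Proof.
  induction n; intros a f [c [h [H1 H2]]].
  - simpl in *. intros x; unfold Df; rewrite !H2, !H1; ring.
  - apply PD_ext with (fun x => h (x + 1) + x * Df h x).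
    + eapply PD_add.
      * apply PD_shift; eauto.
      * apply PD_mulx. apply (IHn a); auto.
      * rewrite (S_INR (S n)); ring.
    + intros x; unfold Df; rewrite !H2; ring.
Qed.

Fixpoint Dk (k : nat) (f : R -> R) : R -> R :=
  match k with O => f | S k' => Df (Dk k' f) end.

Lemma PD_iter k : forall j a f, PD (k + j) a f -> exists s, 0 < s /\ PD j (s * a) (Dk k f).
Proof.
  induction k; intros j a f H.
  - exists 1; split; [lra|]. simpl. eapply PD_coef; eauto; ring.
  - replace (S k + j)%nat with (k + S j)%nat in H by lia. destruct (IHk _ _ _ H) as [s [Hs H']].
    exists (INR (S j) * s); split.
    + apply Rmult_lt_0_compat; auto. apply lt_0_INR; lia.
    + cbn [Dk]. eapply PD_coef. apply PD_diff; eauto. ring.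
Qed.

Lemma peval_zero q : (forall i, nth i q 0 = 0) -> forall x, peval q x = 0.
Proof.
  induction q; simpl; intros H x; auto.
  rewrite (H O), IHq; [ring|]. intros i; apply (H (S i)).
Qed.

Lemma PD_peval p : forall n, (forall i, (n < i)%nat -> nth i p 0 = 0) ->
  PD n (nth n p 0) (peval p).
Proof.
  induction p as [|c q IH]; intros n H.
  - simpl. eapply PD_ext. apply PD_coef with 0. apply PD_zero.
    destruct n; auto. intros; auto.
  - destruct n.
    + simpl. intros x. rewrite peval_zero; [ring|].
      intros i; apply (H (S i)); lia.
    + simpl. exists c, (peval q); split; auto.
      apply IH. intros i Hi. apply (H (S i)); lia.
Qed.

Lemma top_coef p : nonconstant_poly p ->
  exists n, (1 <= n)%nat /\ nth n p 0 <> 0 /\ forall i, (n < i)%nat -> nth i p 0 = 0.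
Proof.
  intros Hp.
  assert (G : forall N, (forall i, (N <= i)%nat -> nth i p 0 = 0) ->
    exists n, (1 <= n)%nat /\ nth n p 0 <> 0 /\ forall i, (n < i)%nat -> nth i p 0 = 0).
  { induction N; intros HN.
    - destruct Hp as [i [Hi Hn]]. exfalso; apply Hn, HN; lia.
    - destruct (Req_dec (nth N p 0) 0) as [E|E].
      + apply IHN. intros i Hi. destruct (Nat.eq_dec i N); subst; auto. apply HN; lia.
      + destruct N.
        * destruct Hp as [i [Hi Hn]]. exfalso; apply Hn, HN; lia.
        * exists (S N); repeat split; auto; try lia. }
  apply (G (length p)). intros i Hi; apply nth_overflow; auto.
Qed.

Lemma floor_nat A t : 0 < A -> 0 <= t -> exists m : nat, A * INR m <= t < A * INR (S m).
Proof.
  intros HA Ht.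
  destruct (INR_unbounded (t / A)) as [N HN].
  assert (HtN : t < A * INR N).
  { apply Rmult_lt_compat_l with (r := A) in HN; auto.
    unfold Rdiv in HN. rewrite <- Rmult_assoc, (Rmult_comm A t), Rmult_assoc,
      Rinv_r, Rmult_1_r in HN; lra. }
  clear HN. induction N.
  - simpl in HtN; lra.
  - destruct (Rlt_dec t (A * INR N)) as [L|L]; auto.
    exists N; split; lra.
Qed.

Lemma cover p (hp : nonconstant_poly p) delta (hd : 0 < delta) :
  exists K, 0 < K /\ forall (d : R -> R) c,
    (forall s t, d (s + t) <= d s + d t) -> (forall t, d (- t) = d t) -> d 0 = 0 ->
    (forall t, - delta < t < delta -> d t <= c) ->
    (forall k : nat, d (peval p (INR k)) <= c) -> forall t, d t <= K * c.
Proof.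
  destruct (top_coef p hp) as [n [Hn1 [Ha Hhi]]].
  pose proof (PD_peval p n Hhi) as HP.
  assert (HP2 : PD ((n-1)+1) (nth n p 0) (peval p)) by (replace ((n-1)+1)%nat with n by lia; exact HP).
  destruct (PD_iter _ _ _ _ HP2) as [s [Hs HL]].
  set (L := Dk (n - 1) (peval p)) in *.
  destruct HL as [cL [g [Hg HLx]]]. simpl in Hg.
  set (alpha := s * nth n p 0) in *.
  assert (Halpha : alpha <> 0) by (unfold alpha; intro E; apply Rmult_integral in E; lra).
  set (A := Rabs alpha).
  assert (HA : 0 < A) by (apply Rabs_pos_lt; auto).
  destruct (INR_unbounded (2 * A / delta)) as [Nd HNd].
  assert (HNd' : A < INR Nd * (delta / 2)).
  { apply Rmult_lt_compat_r with (r := delta / 2) in HNd; [|lra].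
    replace (2 * A / delta * (delta / 2)) with A in HNd; [lra|field; lra]. }
  set (M := 2 * 2 ^ (n - 1)).
  assert (HM : 0 < M) by (unfold M; apply Rmult_lt_0_compat; [lra| apply pow_lt; lra]).
  exists (M + INR Nd); split.
  { pose proof (pos_INR Nd); lra. }
  intros d c Hsub Hneg H0 Hsmall Hq.
  assert (Hc : 0 <= c) by (rewrite <- H0; apply Hsmall; lra).
  assert (Hdsub : forall u v, d (u - v) <= d u + d v).
  { intros u v. unfold Rminus. rewrite <- (Hneg v). apply Hsub. }
  assert (Hit : forall k m, d (Dk k (peval p) (INR m)) <= 2 ^ k * c).
  { induction k; intros m.
    - simpl. rewrite Rmult_1_l; apply Hq.
    - cbn [Dk]. unfold Df. rewrite <- S_INR.
      eapply Rle_trans; [apply Hdsub|]. pose proof (IHk (S m)); pose proof (IHk m).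
      replace (2 ^ S k) with (2 * 2 ^ k) by (simpl; ring). lra. }
  assert (Hlin : forall m, d (alpha * INR m) <= M * c).
  { intros m. replace (alpha * INR m) with (L (INR m) - L (INR 0)).
    - eapply Rle_trans; [apply Hdsub|]. pose proof (Hit (n-1)%nat m); pose proof (Hit (n-1)%nat 0%nat).
      unfold L in *; unfold M; lra.
    - rewrite !HLx, !Hg. simpl. ring. }
  assert (Hsm : forall N r, Rabs r <= INR N * (delta / 2) -> d r <= INR N * c).
  { induction N; intros r Hr.
    - simpl in Hr. assert (r = 0) by (pose proof (Rabs_pos r); destruct (Rcase_abs r); [rewrite Rabs_left in Hr|rewrite Rabs_right in Hr]; lra).
      subst; rewrite H0; simpl; lra.
    - rewrite S_INR in Hr |- *. pose proof (pos_INR N).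
      assert (0 <= INR N * c) by (apply Rmult_le_pos; auto).
      destruct (Rlt_dec (Rabs r) delta) as [Hl|Hl].
      + assert (d r <= c) by (apply Hsmall; apply Rabs_def2 in Hl; lra). lra.
      + destruct (Rle_dec 0 r) as [Hr0|Hr0].
        * rewrite Rabs_right in Hr, Hl by lra.
          replace r with (delta / 2 + (r - delta / 2)) by ring.
          eapply Rle_trans; [apply Hsub|].
          assert (d (delta / 2) <= c) by (apply Hsmall; lra).
          assert (d (r - delta / 2) <= INR N * c) by (apply IHN; rewrite Rabs_right; lra).
          lra.
        * rewrite Rabs_left in Hr, Hl by lra.
          replace r with (- (delta / 2) + (r + delta / 2)) by ring.
          eapply Rle_trans; [apply Hsub|].
          assert (d (- (delta / 2)) <= c) by (apply Hsmall; lra).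
          assert (d (r + delta / 2) <= INR N * c) by (apply IHN; rewrite Rabs_left; lra).
          lra. }
  intros t.
  assert (Hdt : d t = d (Rabs t)).
  { destruct (Rle_dec 0 t). rewrite Rabs_right; lra. rewrite Rabs_left by lra; rewrite Hneg; auto. }
  rewrite Hdt.
  destruct (floor_nat A (Rabs t) HA (Rabs_pos t)) as [m [Hm1 Hm2]].
  rewrite S_INR in Hm2.
  replace (Rabs t) with (A * INR m + (Rabs t - A * INR m)) by ring.
  eapply Rle_trans; [apply Hsub|].
  assert (d (A * INR m) <= M * c).
  { unfold A. destruct (Rle_dec 0 alpha).
    - rewrite Rabs_right by lra. apply Hlin.
    - rewrite Rabs_left by lra. replace (- alpha * INR m) with (- (alpha * INR m)) by ring.
      rewrite Hneg; apply Hlin. }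
  assert (d (Rabs t - A * INR m) <= INR Nd * c).
  { apply Hsm. rewrite Rabs_right by lra. lra. }
  lra.
Qed.

Section Hil.
Variable H : HilbertSpace.
Implicit Types x y z a b c w u : H.

Definition ip (x y : H) : R := Cre (hinner x y).

Lemma ip_sym x y : ip x y = ip y x.
Proof. unfold ip. rewrite (hinner_conj H x y). unfold Cconj, Cre; simpl; auto. Qed.

Lemma ip_addl x y z : ip (hadd x y) z = ip x z + ip y z.
Proof. unfold ip. rewrite hinner_add. unfold Cadd, Cre; simpl; auto. Qed.

Lemma ip_addr x y z : ip z (hadd x y) = ip z x + ip z y.
Proof. rewrite ip_sym, ip_addl, (ip_sym x), (ip_sym y); auto. Qed.

Lemma ip_scl r x y : ip (hscal (r, 0) x) y = r * ip x y.
Proof. unfold ip. rewrite hinner_scal. unfold Cmul, Cre; simpl; ring. Qed.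

Lemma ip_scr r x y : ip y (hscal (r, 0) x) = r * ip y x.
Proof. rewrite ip_sym, ip_scl, ip_sym; auto. Qed.

Lemma ip_negl x y : ip (hscal Cneg1 x) y = - ip x y.
Proof. unfold ip. rewrite hinner_scal. unfold Cmul, Cneg1, Cre; simpl; ring. Qed.

Lemma ip_negr x y : ip y (hscal Cneg1 x) = - ip y x.
Proof. rewrite ip_sym, ip_negl, ip_sym; auto. Qed.

Lemma ip_subl a b c : ip (hsub a b) c = ip a c - ip b c.
Proof. unfold hsub. rewrite ip_addl, ip_negl; ring. Qed.

Lemma ip_subr a b c : ip c (hsub a b) = ip c a - ip c b.
Proof. unfold hsub. rewrite ip_addr, ip_negr; ring. Qed.

Lemma ip_ss a b (a' b' : H) : ip (hsub a b) (hsub a' b') = ip a a' - ip a b' - ip b a' + ip b b'.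
Proof. rewrite ip_subl, !ip_subr; ring. Qed.

Lemma ip_zero_l y : ip hzero y = 0.
Proof.
  assert (E : ip (hadd hzero hzero) y = ip hzero y) by (rewrite hadd_zero; auto).
  rewrite ip_addl in E; lra.
Qed.

Lemma ip_pos x : 0 <= ip x x.
Proof. apply hinner_pos. Qed.

Lemma ip_def x : ip x x = 0 -> x = hzero.
Proof.
  intros E. apply hinner_def. unfold ip, Cre in E.
  pose proof (hinner_conj H x x) as Ec. unfold Cconj in Ec.
  destruct (hinner x x) as [r i]. simpl in *. injection Ec; intros. unfold C0.
  f_equal; lra.
Qed.

Lemma hnorm_sq x : hnorm x * hnorm x = ip x x.
Proof. unfold hnorm. apply sqrt_sqrt, ip_pos. Qed.

Lemma hnorm_pos x : 0 <= hnorm x.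
Proof. unfold hnorm. apply sqrt_pos. Qed.

Lemma CS a b : Rabs (ip a b) <= hnorm a * hnorm b.
Proof.
  assert (Q : forall r, 0 <= ip a a - 2 * r * ip a b + r * r * ip b b).
  { intros r. pose proof (ip_pos (hadd a (hscal (- r, 0) b))) as P.
    rewrite ip_addl, !ip_addr, !ip_scl, !ip_scr, (ip_sym b a) in P. nra. }
  assert (K : ip a b * ip a b <= ip a a * ip b b).
  { pose proof (ip_pos b) as Pb. destruct (Rle_lt_or_eq_dec _ _ Pb) as [Cp|C0'].
    - pose proof (Q (ip a b / ip b b)) as Qr.
      assert (E : ip a a - 2 * (ip a b / ip b b) * ip a b + ip a b / ip b b * (ip a b / ip b b) * ip b b
         = ip a a - ip a b * ip a b / ip b b) by (field; lra).
      rewrite E in Qr.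
      apply Rmult_le_reg_r with (/ ip b b). apply Rinv_0_lt_compat; auto.
      replace (ip a a * ip b b * / ip b b) with (ip a a) by (field; lra).
      unfold Rdiv in Qr; lra.
    - rewrite <- C0'. destruct (Req_dec (ip a b) 0) as [Z|Z].
      + rewrite Z; pose proof (ip_pos a); nra.
      + pose proof (Q ((ip a a + 1) / (2 * ip a b))) as Qr. rewrite <- C0' in Qr.
        replace (ip a a - 2 * ((ip a a + 1) / (2 * ip a b)) * ip a b +
          (ip a a + 1) / (2 * ip a b) * ((ip a a + 1) / (2 * ip a b)) * 0) with (-1) in Qr
          by (field; auto). lra. }
  rewrite <- (hnorm_sq a), <- (hnorm_sq b) in K.
  pose proof (hnorm_pos a); pose proof (hnorm_pos b).
  assert (0 <= hnorm a * hnorm b) by (apply Rmult_le_pos; auto).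
  assert (K2 : Rsqr (ip a b) <= Rsqr (hnorm a * hnorm b)) by (unfold Rsqr; nra).
  apply Rsqr_le_abs_0 in K2. rewrite (Rabs_right (hnorm a * hnorm b)) in K2 by lra. auto.
Qed.

Lemma sq_le_sqrt (u v : R) : 0 <= v -> u <= v * v -> sqrt u <= v.
Proof.
  intros Hv Hu. destruct (Rle_dec 0 u).
  - rewrite <- (sqrt_square v Hv). apply sqrt_le_1; auto. apply Rmult_le_pos; auto.
  - rewrite sqrt_neg_0; lra.
Qed.

Lemma tri a b c : hnorm (hsub a c) <= hnorm (hsub a b) + hnorm (hsub b c).
Proof.
  unfold hnorm at 1. apply sq_le_sqrt.
  { pose proof (hnorm_pos (hsub a b)); pose proof (hnorm_pos (hsub b c)); lra. }
  pose proof (CS (hsub a b) (hsub b c)) as Cs.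
  pose proof (Rle_abs (ip (hsub a b) (hsub b c))).
  assert (E : Cre (hinner (hsub a c) (hsub a c)) = ip (hsub a b) (hsub a b) + 2 * ip (hsub a b) (hsub b c) + ip (hsub b c) (hsub b c)).
  { change (Cre (hinner (hsub a c) (hsub a c))) with (ip (hsub a c) (hsub a c)).
    rewrite !ip_ss, (ip_sym c a), (ip_sym b a), (ip_sym c b). ring. }
  rewrite E, <- !hnorm_sq. nra.
Qed.

Lemma nrm_sym a b : hnorm (hsub a b) = hnorm (hsub b a).
Proof.
  unfold hnorm. f_equal. change (ip (hsub a b) (hsub a b) = ip (hsub b a) (hsub b a)).
  rewrite !ip_ss, (ip_sym b a). ring.
Qed.

Lemma sub_zero w z : hsub w z = hzero -> w = z.
Proof.
  unfold hsub. intros E.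
  rewrite <- (hadd_zero H w).
  assert (I : hadd (hscal Cneg1 z) z = hzero) by (rewrite hadd_comm; apply hadd_inv).
  rewrite <- I, hadd_assoc, E, hadd_comm, hadd_zero; auto.
Qed.

Variable pi : R -> H -> H.
Hypothesis Hpi : unitary_rep H pi.

Lemma pi_add t a b : pi t (hadd a b) = hadd (pi t a) (pi t b).
Proof. apply Hpi. Qed.
Lemma pi_scal t (c : Defs.C) a : pi t (hscal c a) = hscal c (pi t a).
Proof. apply Hpi. Qed.
Lemma pi_ip t a b : ip (pi t a) (pi t b) = ip a b.
Proof. unfold ip. destruct Hpi as [_ [_ [E _]]]. rewrite E; auto. Qed.
Lemma pi_0 a : pi 0 a = a.
Proof. apply Hpi. Qed.
Lemma pi_comp s t a : pi (s + t) a = pi s (pi t a).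
Proof. apply Hpi. Qed.

Lemma pi_sub t a b : pi t (hsub a b) = hsub (pi t a) (pi t b).
Proof. unfold hsub. rewrite pi_add, pi_scal; auto. Qed.

Lemma nrm_pi_sub t a b : hnorm (hsub (pi t a) (pi t b)) = hnorm (hsub a b).
Proof. unfold hnorm. rewrite <- pi_sub. change (sqrt (ip (pi t (hsub a b)) (pi t (hsub a b))) = sqrt (ip (hsub a b) (hsub a b))).
  rewrite pi_ip; auto. Qed.

Variable x : H.
Definition dd (t : R) : R := hnorm (hsub (pi t x) x).

Lemma dd_sub s t : dd (s + t) <= dd s + dd t.
Proof.
  unfold dd. rewrite pi_comp.
  eapply Rle_trans; [apply (tri _ (pi s x))|]. rewrite nrm_pi_sub; lra.
Qed.

Lemma dd_neg t : dd (- t) = dd t.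
Proof.
  unfold dd. rewrite <- (nrm_pi_sub t), <- pi_comp.
  replace (t + - t) with 0 by ring. rewrite pi_0, nrm_sym; auto.
Qed.

Lemma dd_0 : dd 0 = 0.
Proof.
  unfold dd. rewrite pi_0. unfold hnorm.
  change (sqrt (ip (hsub x x) (hsub x x)) = 0). rewrite ip_ss.
  replace (ip x x - ip x x - ip x x + ip x x) with 0 by ring. apply sqrt_0.
Qed.

Definition mid (y w : H) : H := hscal (/ 2, 0) (hadd y w).

Inductive SS : H -> Prop :=
| SS_orb t : SS (pi t x)
| SS_mid y w : SS y -> SS w -> SS (mid y w).

Lemma SS_pi s y : SS y -> SS (pi s y).
Proof.
  induction 1.
  - rewrite <- pi_comp. constructor.
  - unfold mid. rewrite pi_scal, pi_add. constructor; auto.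
Qed.

Lemma ip_mid y w : ip (mid y w) (mid y w) = / 4 * (ip y y + 2 * ip y w + ip w w).
Proof. unfold mid. rewrite ip_scl, ip_scr, ip_addl, !ip_addr, (ip_sym w y). field. Qed.

Lemma paral y w : ip (hsub y w) (hsub y w) = 2 * ip y y + 2 * ip w w - 4 * ip (mid y w) (mid y w).
Proof. rewrite ip_mid, ip_ss, (ip_sym w y). field. Qed.

Hypothesis Hx : 0 < ip x x.
Hypothesis Hclose : forall t, dd t <= hnorm x / 2.

Lemma SS_lb y : SS y -> ip x x / 2 <= ip y x.
Proof.
  induction 1.
  - pose proof (Hclose t) as Ht. unfold dd in Ht.
    pose proof (hnorm_pos (hsub (pi t x) x)).
    assert (Sq : ip (hsub (pi t x) x) (hsub (pi t x) x) <= ip x x / 4).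
    { rewrite <- hnorm_sq, <- (hnorm_sq x). pose proof (hnorm_pos x). nra. }
    rewrite ip_ss, (ip_sym x (pi t x)) in Sq.
    rewrite <- (pi_0 x) in Sq at 2. rewrite pi_ip, pi_0 in Sq. lra.
  - unfold mid. rewrite ip_scl, ip_addl. lra.
Qed.

Lemma small_inv e : 0 < e -> exists N : nat, forall n, (N <= n)%nat -> / (INR n + 1) < e.
Proof.
  intros He. destruct (INR_unbounded (/ e)) as [N HN]. exists N. intros n Hn.
  apply le_INR in Hn.
  assert (0 < / e) by (apply Rinv_0_lt_compat; auto).
  rewrite <- (Rinv_inv e). apply Rinv_lt_contravar.
  - apply Rmult_lt_0_compat; lra.
  - lra.
Qed.

Lemma invariant_exists : exists v : H, v <> hzero /\ forall t, pi t v = v.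
Proof.
  set (E := fun r => exists y, SS y /\ r = - ip y y).
  assert (Eb : bound E).
  { exists 0. intros r [y [_ ->]]. pose proof (ip_pos y); lra. }
  assert (En : exists r, E r) by (exists (- ip (pi 0 x) (pi 0 x)); exists (pi 0 x); split; auto; constructor).
  destruct (completeness E Eb En) as [m [Hub Hlub]].
  set (d := - m).
  assert (Hlow : forall y, SS y -> d <= ip y y).
  { intros y Hy. assert (E (- ip y y)) by (exists y; auto). apply Hub in H0. unfold d; lra. }
  assert (Happ : forall n : nat, exists y, SS y /\ ip y y < d + / (INR n + 1)).
  { intros n. assert (Hb : 0 < / (INR n + 1)) by (apply Rinv_0_lt_compat; pose proof (pos_INR n); lra).
    destruct (Classical_Prop.classic (exists y, SS y /\ ip y y < d + / (INR n + 1))) as [T|F]; auto.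
    exfalso. assert (m <= m - / (INR n + 1)); [|lra].
    apply Hlub. intros r [y [Hy ->]]. destruct (Rlt_dec (ip y y) (d + / (INR n + 1))) as [L|L].
    - exfalso; apply F; exists y; auto.
    - unfold d in L; lra. }
  set (Y := fun n => proj1_sig (constructive_indefinite_description _ (Happ n))).
  assert (HY : forall n, SS (Y n) /\ ip (Y n) (Y n) < d + / (INR n + 1))
    by (intros n; unfold Y; destruct (constructive_indefinite_description _ (Happ n)); auto).
  assert (Hpair : forall y w e1 e2, SS y -> SS w -> ip y y < d + e1 -> ip w w < d + e2 ->
     ip (hsub y w) (hsub y w) < 2 * (e1 + e2)).
  { intros y w e1 e2 Hy Hw H1 H2. rewrite paral.
    pose proof (Hlow _ (SS_mid _ _ Hy Hw)). lra. }
  assert (Hsq : forall (u e : R), 0 < e -> u < e * e -> sqrt u < e).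
  { intros u e He Hu. destruct (Rle_dec 0 u).
    - rewrite <- (sqrt_square e) by lra. apply sqrt_lt_1_alt; lra.
    - rewrite sqrt_neg_0; lra. }
  assert (Hcauchy : forall eps, 0 < eps -> exists N, forall n m0, (n >= N)%nat -> (m0 >= N)%nat ->
        hnorm (hsub (Y n) (Y m0)) < eps).
  { intros eps He. destruct (small_inv (eps * eps / 4)) as [N HN].
    { apply Rmult_lt_0_compat; [apply Rmult_lt_0_compat|]; lra. }
    exists N. intros n m0 Hn Hm. apply Hsq; auto.
    destruct (HY n) as [Sn In]; destruct (HY m0) as [Sm Im].
    pose proof (Hpair _ _ _ _ Sn Sm In Im). pose proof (HN n Hn); pose proof (HN m0 Hm).
    change (ip (hsub (Y n) (Y m0)) (hsub (Y n) (Y m0)) < eps * eps). lra. }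
  destruct (hcomplete H Y Hcauchy) as [z Hz].
  change (forall eps, 0 < eps -> exists N, forall n, (n >= N)%nat -> hnorm (hsub (Y n) z) < eps) in Hz.
  exists z; split.
  - intros Ez.
    assert (Hnx : 0 < hnorm x) by (unfold hnorm; apply sqrt_lt_R0; auto).
    destruct (Hz (ip x x / (4 * hnorm x))) as [N HN].
    { apply Rdiv_lt_0_compat; lra. }
    pose proof (HN N (le_n N)) as HNN.
    destruct (HY N) as [SN _]. pose proof (SS_lb _ SN) as Lb.
    pose proof (CS (hsub (Y N) z) x) as Cs.
    rewrite ip_subl, Ez, ip_zero_l, Rminus_0_r in Cs.
    apply Rle_trans with (r3 := ip x x / (4 * hnorm x) * hnorm x) in Cs.
    + replace (ip x x / (4 * hnorm x) * hnorm x) with (ip x x / 4) in Cs by (field; lra).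
      pose proof (Rle_abs (ip (Y N) x)). lra.
    + rewrite Ez in HNN. apply Rmult_le_compat_r; lra.
  - intros s. apply sub_zero. apply ip_def.
    assert (Hn0 : hnorm (hsub (pi s z) z) = 0).
    { apply Rle_antisym; [|apply hnorm_pos].
      apply Rnot_lt_le. intros Hp. set (e := hnorm (hsub (pi s z) z)) in *.
      destruct (Hz (e / 3)) as [N1 HN1]; [lra|].
      destruct (small_inv (e * e / 36)) as [N2 HN2].
      { apply Rmult_lt_0_compat; [apply Rmult_lt_0_compat|]; lra. }
      set (n := Nat.max N1 N2).
      pose proof (HN1 n (Nat.le_max_l _ _)) as A1. pose proof (HN2 n (Nat.le_max_r _ _)) as A2.
      destruct (HY n) as [Sn In].
      pose proof (SS_pi s _ Sn) as Sp.
      assert (Ip : ip (pi s (Y n)) (pi s (Y n)) < d + / (INR n + 1)) by (rewrite pi_ip; auto).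
      pose proof (Hpair _ _ _ _ Sp Sn Ip In) as Hpr.
      assert (B2 : hnorm (hsub (pi s (Y n)) (Y n)) < e / 3).
      { apply Hsq; [lra|]. change (ip (hsub (pi s (Y n)) (Y n)) (hsub (pi s (Y n)) (Y n)) < e / 3 * (e / 3)). lra. }
      pose proof (tri (pi s z) (pi s (Y n)) z) as T1.
      pose proof (tri (pi s (Y n)) (Y n) z) as T2.
      rewrite nrm_pi_sub, (nrm_sym z (Y n)) in T1. fold e in T1. lra. }
    unfold hnorm in Hn0. apply sqrt_eq_0 in Hn0; auto. apply ip_pos.
Qed.

End Hil.

Theorem mainTheorem12 (p : list R) (hp : nonconstant_poly p) (delta : R) (hdelta : 0 < delta) :
  kazhdan_set (fun t => (- delta < t < delta) \/ exists k : nat, t = peval p (INR k)).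
Proof.
  destruct (cover p hp delta hdelta) as [K [HK Hcov]].
  exists (/ (2 * K)). split.
  { apply Rinv_0_lt_compat; lra. }
  intros H pi Hpi _ [x [c [Hc Hd]]].
  assert (Hall : forall t, dd H pi x t <= K * c).
  { apply Hcov.
    - apply dd_sub; auto.
    - apply dd_neg; auto.
    - apply dd_0; auto.
    - intros t Ht. apply Hd. left; auto.
    - intros k. apply Hd. right; exists k; auto. }
  assert (Hc0 : 0 <= c).
  { pose proof (Hd 0 (or_introl (conj (ltac:(lra) : - delta < 0) hdelta))) as D0.
    pose proof (dd_0 H pi Hpi x) as E. unfold dd in E. lra. }
  assert (Hnx : 0 < hnorm x).
  { pose proof (hnorm_pos H x) as P.
    destruct (Rle_lt_or_eq_dec _ _ P) as [L|L]; auto.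
    rewrite <- L in Hc. lra. }
  apply (invariant_exists H pi Hpi x).
  - rewrite <- hnorm_sq. apply Rmult_lt_0_compat; auto.
  - intros t. eapply Rle_trans; [apply Hall|].
    apply Rmult_lt_compat_l with (r := K) in Hc; auto.
    replace (K * (/ (2 * K) * hnorm x)) with (hnorm x / 2) in Hc by (field; lra). lra.
Qed.
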